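(* Consider the Markov process described in the context with $K=1$, satisfying Assumption (A) and the ergodicity condition (E). For each $x\in\{-1,1\}^c$ let $\beta_{0,x}\in(0,1)$ be a root of $(\mathrm E_x)$, and for $i=1,\dots,c$ let \[\beta_{i,x}=\frac{F_i(\beta_{0,x})+x_iR_i(\beta_{0,x})}{2D_i(\beta_{0,x})}.\] Then the $2^c$ functions $W\ni\mathbf n\mapsto \beta_{0,x}^{n_0}\beta_{1,x}^{n_1}\cdots\beta_{c,x}^{n_c}$, $x\in\{-1,1\}^c$, are linearly independent on $W$.
   Context: Fix integers $c\ge 1$ and $K\ge1$ (in the claim $K=1$). Consider an irreducible continuous-time Markov process on $V\cup W$, where $V$ is finite and $W=\{\mathbf n=(n_0,\dots,n_c): n_0\in\{0,1,\dots\},\ n_i\in\{0,1\}\}$. For each $i\in\{1,\dots,c\}$ and integer $k\le K$ there are nonnegative rates $a_{k,i},b_{k,i},c_{k,i},d_{k,i}$. From $\mathbf n\in W$, for each $i$ and $k\in\{-n_0,\dots,K\}$, the process jumps (changing only coordinates $0$ and $i$) from $(n_0,n_i)=(n_0,0)$ to $(n_0+k,1)$ at rate $a_{k,i}$ and to $(n_0+k,0)$ at rate $b_{k,i}$, and from $(n_0,1)$ to $(n_0+k,1)$ at rate $c_{k,i}$ and to $(n_0+k,0)$ at rate $d_{k,i}$; from $\mathbf n$ it jumps into $V$ with total rate $\sum_i\sum_{k\le -n_0-1}((1-n_i)(a_{k,i}+b_{k,i})+n_i(c_{k,i}+d_{k,i}))$; no other transitions leave $W$, and from $V$ no transitions go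 to states with $n_0\ge K$. Let $A_i(z)=\sum_{k=-\infty}^K a_{k,i}z^{K-k}$ and similarly $B_i,C_i,D_i$ with $b,c,d$. Assumption (A): for each $i$: (i) $A_i(1),B_i(1),C_i(1),D_i(1)<\infty$; (ii) $A_i(1),D_i(1)>0$; (iii) $A_i'(1),B_i'(1),C_i'(1),D_i'(1)<\infty$; (iv) $a_{K,i}=0$ or $d_{K,i}=0$; (v) $b_{K,i}=c_{K,i}\ne0$. Ergodicity condition (E): $0<\sum_{i=1}^c\frac{1}{A_i(1)+D_i(1)}\bigl(D_i(1)(A_i'(1)-KA_i(1)+B_i'(1)-KB_i(1))+A_i(1)(C_i'(1)-KC_i(1)+D_i'(1)-KD_i(1))\bigr)$. Let $F_i(z)=z^K(A_i(1)+B_i(1)-C_i(1)-D_i(1))-B_i(z)+C_i(z)$. For real $\beta_0\in[0,1]$ let $R_i(\beta_0)=\sqrt{F_i(\beta_0)^2+4A_i(\beta_0)D_i(\beta_0)}$ (nonnegative square root). For $x\in\{-1,1\}^c$, equation $(\mathrm E_x)$ in the unknown $\beta_0$ is \[0=\sum_{i=1}^c\Bigl(x_iR_i(\beta_0)+B_i(\beta_0)+C_i(\beta_0)-\beta_0^K\bigl(A_i(1)+B_i(1)+C_i(1)+D_i(1)\bigr)\Bigr).\] *)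

(* Defs.v *)
From HB Require Import structures.
From mathcomp Require Import all_boot all_order all_algebra.
From mathcomp Require Import all_classical all_reals all_analysis.
Set Implicit Arguments. Unset Strict Implicit. Unset Printing Implicit Defensive.
Import Order.TTheory GRing.Theory Num.Theory.
Import numFieldNormedType.Exports.
Local Open Scope ring_scope.

(* Rates: r : int -> R gives r_k for integer k <= K (values for k > K unused).
   Coefficient of z^m in the generating function is r_(K-m). *)
Definition gcoef {R : realType} (K : nat) (r : int -> R) (m : nat) : R :=
  r (K%:Z - m%:Z).

Definition genf {R : realType} (K : nat) (r : int -> R) (z : R) : R :=
  limn (series (fun m => gcoef K r m * z ^+ m)).

Definition genf_fin1 {R : realType} (K : nat) (r : int -> R) : Prop :=
  cvgn (series (fun m => gcoef K r m)).

Definition genf_d1 {R : realType} (K : nat) (r : int -> R) : R :=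
  limn (series (fun m => m%:R * gcoef K r m)).

Definition genf_d1_fin {R : realType} (K : nat) (r : int -> R) : Prop :=
  cvgn (series (fun m => m%:R * gcoef K r m)).

Section Model.
Variables (R : realType) (c K : nat).
Variables (a b cr d : 'I_c -> int -> R).

Definition Agf i := genf K (a i).
Definition Bgf i := genf K (b i).
Definition Cgf i := genf K (cr i).
Definition Dgf i := genf K (d i).

Definition rates_nonneg : Prop :=
  forall i (k : int), k <= K%:Z ->
    0 <= a i k /\ 0 <= b i k /\ 0 <= cr i k /\ 0 <= d i k.

Definition assumptionA : Prop :=
  forall i : 'I_c,
    [/\ genf_fin1 K (a i) /\ genf_fin1 K (b i) /\ genf_fin1 K (cr i) /\ genf_fin1 K (d i),
        0 < Agf i 1 /\ 0 < Dgf i 1,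
        genf_d1_fin K (a i) /\ genf_d1_fin K (b i) /\ genf_d1_fin K (cr i) /\ genf_d1_fin K (d i),
        a i K%:Z = 0 \/ d i K%:Z = 0
      & b i K%:Z = cr i K%:Z /\ b i K%:Z != 0].

Definition ergodicityE : Prop :=
  0 < \sum_(i < c) (Agf i 1 + Dgf i 1)^-1 *
        (Dgf i 1 * (genf_d1 K (a i) - K%:R * Agf i 1 + genf_d1 K (b i) - K%:R * Bgf i 1)
         + Agf i 1 * (genf_d1 K (cr i) - K%:R * Cgf i 1 + genf_d1 K (d i) - K%:R * Dgf i 1)).

Definition Ffun i (z : R) : R :=
  z ^+ K * (Agf i 1 + Bgf i 1 - Cgf i 1 - Dgf i 1) - Bgf i z + Cgf i z.

Definition Rfun i (z : R) : R :=
  Num.sqrt (Ffun i z ^+ 2 + 4 * Agf i z * Dgf i z).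

Definition sgnb (s : bool) : R := if s then 1 else -1.

Definition Ex_rhs (x : {ffun 'I_c -> bool}) (z : R) : R :=
  \sum_(i < c) (sgnb (x i) * Rfun i z + Bgf i z + Cgf i z
                - z ^+ K * (Agf i 1 + Bgf i 1 + Cgf i 1 + Dgf i 1)).

Definition beta_i (x : {ffun 'I_c -> bool}) (beta0 : R) (i : 'I_c) : R :=
  (Ffun i beta0 + sgnb (x i) * Rfun i beta0) / (2 * Dgf i beta0).

End Model.

(* Main.v *)
Require Import Defs.
From HB Require Import structures.
From mathcomp Require Import all_boot all_order all_algebra.
From mathcomp Require Import all_classical all_reals all_analysis.
From mathcomp Require Import ring lra.
Import Order.TTheory GRing.Theory Num.Theory.
Import numFieldNormedType.Exports.
Local Open Scope ring_scope.

Lemma genf_pos (R : realType) (r : int -> R) (z : R) :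
  (forall m, 0 <= gcoef 1 r m) -> genf_fin1 1 r -> 0 < genf 1 r 1 ->
  0 < z -> z <= 1 -> 0 < genf 1 r z.
Proof.
move=> g0 cv g1 z0 z1.
have [m0 hm0] : exists m0, 0 < gcoef 1 r m0.
  apply/not_existsP => /= H.
  move: g1; rewrite /genf.
  have -> : series (fun m => gcoef 1 r m * 1 ^+ m) = (fun=> 0 : R).
    apply/funext => n; rewrite /series /= big1 // => i _.
    have := g0 i; rewrite le_eqVlt => /orP[/eqP<-|h]; first by rewrite mul0r.
    by exfalso; apply: (H i).
  by rewrite lim_cst ?ltxx//; exact: norm_hausdorff.
have t0 : forall m, 0 <= gcoef 1 r m * z ^+ m.
  by move=> m; rewrite mulr_ge0 // exprn_ge0 // ltW.
have cz : cvgn (series (fun m => gcoef 1 r m * z ^+ m)).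
  apply: (series_le_cvg t0 g0 _ cv) => m.
  by rewrite ler_piMr // exprn_ile1 // ltW.
apply: (lt_le_trans _ (nondecreasing_cvgn_le _ cz m0.+1)).
  rewrite /series /= big_nat_recr //=.
  apply: ltr_wpDl; first by apply: sumr_ge0 => i _.
  by rewrite mulr_gt0 // exprn_gt0.
exact: nondecreasing_series.
Qed.

Section Indep.
Variables (R : realType) (c : nat).
Local Notation X := {ffun 'I_c -> bool}.
Variables (u : X -> R) (V : R -> bool -> 'I_c -> R) (gamma : X -> R).
Hypothesis hV : forall x i, V (u x) true i != V (u x) false i.
Hypothesis H : forall (n0 : nat) (n : X),
  \sum_(x : X) gamma x * (u x ^+ n0 * \prod_(i < c) V (u x) (x i) i ^+ (n i : nat)) = 0.

Lemma stepA (p : {poly R}) (w : 'I_c -> R) :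
  \sum_(x : X) gamma x * (p.[u x] * \prod_(i < c) (V (u x) (x i) i - w i)) = 0.
Proof.
have E : forall x, \prod_(i < c) (V (u x) (x i) i - w i) =
   \sum_(f : X) (\prod_(i < c) (if f i then 1 else - w i)) *
                \prod_(i < c) V (u x) (x i) i ^+ (f i : nat).
  move=> x; rewrite (eq_bigr (fun i => \sum_(j : bool)
      (if j then 1 else - w i) * V (u x) (x i) i ^+ (j : nat))); last first.
    by move=> i _; rewrite big_bool /= mul1r expr1 expr0 mulr1.
  rewrite bigA_distr_bigA; apply: eq_bigr => f _; by rewrite big_split.
under eq_bigr => x _ do rewrite E horner_coef big_distrl /= big_distrr /=.
under eq_bigr => x _ do under eq_bigr => k _ do rewrite !big_distrr /=.
rewrite exchange_big /=; apply: big1 => k _.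
rewrite exchange_big /=; apply: big1 => f _.
transitivity (p`_k * \prod_(i < c) (if f i then 1 else - w i) *
  \sum_(x : X) gamma x * (u x ^+ k * \prod_(i < c) V (u x) (x i) i ^+ (f i : nat)));
  last by rewrite H mulr0.
rewrite big_distrr /=; apply: eq_bigr => x _; ring.
Qed.

Lemma indep : forall x, gamma x = 0.
Proof.
move=> xs.
pose p := \prod_(y : X | u y != u xs) ('X - (u y)%:P).
pose w i := V (u xs) (~~ xs i) i.
have := stepA p w.
rewrite [\sum_(x : X) _](bigD1 xs) //= [X in _ + X]big1 ?addr0; last first.
  move=> y hy.
  have [hu|hu] := eqVneq (u y) (u xs); last first.
    by rewrite /p horner_prod (bigD1 y) //= hornerXsubC subrr mul0r mul0r mulr0.
  have [i hi] : exists i, y i != xs i.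
    apply/existsP; rewrite -negb_forall; apply: contra hy => /forallP h.
    by apply/eqP/ffunP => j; apply/eqP/h.
  have hyi : y i = ~~ xs i by case: (y i) (xs i) hi => [] [].
  by rewrite (bigD1 i) //= /w hu hyi subrr mul0r mulr0 mulr0.
move/eqP; rewrite mulf_eq0 => /orP[/eqP //|]; rewrite mulf_eq0 => /orP[|] /eqP h.
  exfalso; move: h; apply/eqP.
  rewrite /p horner_prod; apply/prodf_neq0 => y hy.
  by rewrite hornerXsubC subr_eq0 eq_sym.
exfalso; move: h; apply/eqP; apply/prodf_neq0 => i _.
rewrite subr_eq0 /w; case: (xs i) => /=; [exact: hV | by rewrite eq_sym hV].
Qed.
End Indep.

Theorem lemma4 (R : realType) (c : nat) (hc : (1 <= c)%N)
    (a b cr d : 'I_c -> int -> R)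
    (hnn : rates_nonneg 1 a b cr d)
    (hA : assumptionA 1 a b cr d)
    (hE : ergodicityE 1 a b cr d)
    (beta0 : {ffun 'I_c -> bool} -> R)
    (hbeta0 : forall x, 0 < beta0 x < 1)
    (hroot : forall x, Ex_rhs 1 a b cr d x (beta0 x) = 0) :
  forall gamma : {ffun 'I_c -> bool} -> R,
    (forall (n0 : nat) (n : {ffun 'I_c -> bool}),
        \sum_(x : {ffun 'I_c -> bool})
           gamma x * (beta0 x ^+ n0 *
                      \prod_(i < c) beta_i 1 a b cr d x (beta0 x) i ^+ (n i : nat)) = 0) ->
    forall x, gamma x = 0.
Proof.
move=> gamma H.
pose V z (s : bool) i := beta_i 1 a b cr d [ffun=> s] z i.
have eV : forall x i, beta_i 1 a b cr d x (beta0 x) i = V (beta0 x) (x i) i.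
  by move=> x i; rewrite /V /beta_i ffunE.
have gc : forall (r : int -> R) m, (forall k : int, k <= 1 -> 0 <= r k) -> 0 <= gcoef 1 r m.
  move=> r m hr; apply: hr; rewrite lerBlDr lerDl //.
apply: (@indep R c beta0 V gamma); last first.
  move=> n0 n; rewrite -[RHS](H n0 n); apply: eq_bigr => x _.
  by congr (_ * (_ * _)); apply: eq_bigr => i _; rewrite eV.
move=> x i.
have [z0 z1] := andP (hbeta0 x).
case: (hA i) => [[fa [fb [fc fd]]] [a1 d1] _ _ _].
have Ap : 0 < Agf 1 a i (beta0 x).
  apply: genf_pos => //; last exact: ltW.
  by move=> m; apply: gc => k hk; have [] := hnn i k hk.
have Dp : 0 < Dgf 1 d i (beta0 x).
  apply: genf_pos => //; last exact: ltW.
  by move=> m; apply: gc => k hk; have [_ [_ []]] := hnn i k hk.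
have Rp : 0 < Rfun 1 a b cr d i (beta0 x).
  rewrite /Rfun sqrtr_gt0; apply: ltr_wpDl; first exact: sqr_ge0.
  by rewrite !mulr_gt0.
rewrite /V /beta_i !ffunE /sgnb.
apply/negP => /eqP h.
have h2 := congr1 (fun t => t * (2 * Dgf 1 d i (beta0 x))) h.
rewrite /= !divfK ?mulf_neq0 ?gt_eqF // in h2.
lra.
Qed.
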